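(* Assume $\widetilde{\epsilon}>0$. For $\zeta\in[a,\tau]$ define $$\widetilde{M_2}(\zeta)=\frac{1-\tau_2}{\epsilon-\widetilde{\epsilon}}\,\frac{1-e^{-r(\omega-\tau)}}{ra_\tau}\left(e^{\epsilon(\tau-\zeta)}-e^{\widetilde{\epsilon}(\tau-\zeta)}\right)-\frac{1-\tau_1}{\epsilon}\left(e^{\epsilon(\tau-\zeta)}-1\right),$$ so that $\widetilde{M_2}(\tau)=0$ and $\widetilde{M_2}'(\tau)=1-\tau_1-\frac{1-\tau_2}{ra_\tau}\left(1-e^{-r(\omega-\tau)}\right)$. Then: (i) If $\widetilde{M_2}(a)\ge0$ and $\widetilde{M_2}'(\tau)>0$, there exists a critical age $\bar{\zeta}\in[a,\tau)$ such that $\widetilde{M_2}(\zeta)>0$ for $a\le\zeta<\bar{\zeta}$, $\widetilde{M_2}(\bar{\zeta})=0$, and $\widetilde{M_2}(\zeta)<0$ for $\bar{\zeta}<\zeta<\tau$ (younger participants prefer EET to individual savings, older ones prefer individual savings). (ii) If $\widetilde{M_2}(a)<0$, then $\widetilde{M_2}(\zeta)<0$ for all $\zeta\in[a,\tau)$ (all prefer individual savings to EET). (iii) If $\widetilde{M_2}'(\tau)\le0$, then $\widetilde{M_2}(\zeta)>0$ for all $\zeta\in[a,\tau)$ (all prefer EET to individual savings).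
   Context: Parameters: $r>0$, $\mu>r$, $\sigma>0$, real $\gamma,\xi,\alpha,\beta$; $\nu=(\mu-r)/\sigma$, $\epsilon=\gamma-r-\xi\nu\neq0$, $\widetilde{\epsilon}=\alpha-r-\beta\nu\neq\epsilon$. Ages $a<\tau<\omega$; tax rates $\tau_1,\tau_2\in[0,1)$. With survival function $s(x)=e^{-A_m(x-a)-\frac{B_m}{\ln c}(c^x-c^a)}$ (Makeham constants $A_m,B_m,c$), $a_\tau=\int_0^\infty e^{-(r+A_m)t-\frac{B_m}{\ln c}c^\tau(c^t-1)}dt\in(0,\infty)$ is the annuity factor. Interpretation: $\zeta$ is a participant's age at the decision time, and the sign of $\widetilde{M_2}(\zeta)$ is the sign of the effect of raising the EET contribution rate $k$ (relative to individual savings) on that participant's value function. *)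

(* Defs.v *)
From Stdlib Require Import Reals Lra.
From Coquelicot Require Import Coquelicot.
Open Scope R_scope.

Definition nu (mu r sigma : R) : R := (mu - r) / sigma.

Definition eps (gamma r xi mu sigma : R) : R := gamma - r - xi * nu mu r sigma.

Definition eps_t (alpha r beta mu sigma : R) : R := alpha - r - beta * nu mu r sigma.

(* Integrand of the annuity factor under Makeham's law *)
Definition annuity_integrand (r Am Bm c tau : R) (t : R) : R :=
  exp (- (r + Am) * t - Bm / ln c * Rpower c tau * (Rpower c t - 1)).

Definition annuity (r Am Bm c tau : R) : R :=
  RInt_gen (annuity_integrand r Am Bm c tau) (at_point 0) (Rbar_locally p_infty).

Definition M2t (r tau omega tau1 tau2 e et atau : R) (zeta : R) : R :=
  (1 - tau2) / (e - et) * ((1 - exp (- r * (omega - tau))) / (r * atau))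
    * (exp (e * (tau - zeta)) - exp (et * (tau - zeta)))
  - (1 - tau1) / e * (exp (e * (tau - zeta)) - 1).

Definition M2t'_tau (r tau omega tau1 tau2 atau : R) : R :=
  1 - tau1 - (1 - tau2) / (r * atau) * (1 - exp (- r * (omega - tau))).

(* Main.v *)
Require Import Defs.
From Stdlib Require Import Reals Lra.
From Coquelicot Require Import Coquelicot.
Open Scope R_scope.

Definition ff (A B e et x : R) := A * (exp (e * x) - exp (et * x)) - B * (exp (e * x) - 1).
Definition ffd (A B e et x : R) := A * (e * exp (e * x) - et * exp (et * x)) - B * (e * exp (e * x)).
Definition gg (A B e et x : R) := A * (e - et * exp ((et - e) * x)) - B * e.

Lemma ff_der A B e et x : derivable_pt_lim (ff A B e et) x (ffd A B e et x).
Proof.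
  apply is_derive_Reals. unfold ff, ffd. auto_derive; auto. ring.
Qed.

Lemma ffd_gg A B e et x : ffd A B e et x = exp (e * x) * gg A B e et x.
Proof.
  unfold ffd, gg.
  replace (exp (et * x)) with (exp (e * x) * exp ((et - e) * x)).
  ring. rewrite <- exp_plus. f_equal. ring.
Qed.

Lemma gg_mono A B e et c d : 0 < A * (e - et) -> 0 < et -> c < d ->
  gg A B e et c < gg A B e et d.
Proof.
  intros H1 H2 Hcd. unfold gg.
  destruct (Rlt_or_le 0 (e - et)) as [Hp|Hn].
  - assert (0 < A). { apply (Rmult_lt_reg_r (e - et)); lra. }
    assert (exp ((et - e) * d) < exp ((et - e) * c)) by (apply exp_increasing; nra).
    assert (0 < et * (exp ((et - e) * c) - exp ((et - e) * d))) by (apply Rmult_lt_0_compat; lra).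
    nra.
  - assert (e - et <> 0) by (intro; rewrite H in H1; lra).
    assert (A < 0). { destruct (Rlt_or_le A 0); auto. nra. }
    assert (exp ((et - e) * c) < exp ((et - e) * d)) by (apply exp_increasing; nra).
    assert (0 < et * (exp ((et - e) * d) - exp ((et - e) * c))) by (apply Rmult_lt_0_compat; lra).
    nra.
Qed.

Lemma ff0 A B e et : ff A B e et 0 = 0.
Proof. unfold ff. rewrite !Rmult_0_r, exp_0. ring. Qed.

Lemma keyL A B e et x y : 0 < A * (e - et) -> 0 < et -> 0 < x -> x < y ->
  0 <= ff A B e et x -> 0 < ff A B e et y.
Proof.
  intros H1 H2 Hx Hxy Hf.
  destruct (MVT_cor2 (ff A B e et) (ffd A B e et) 0 x Hx (fun c _ => ff_der A B e et c)) as [c [Hc1 Hc2]].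
  rewrite ff0 in Hc1.
  assert (0 <= ffd A B e et c). { destruct (Rlt_or_le (ffd A B e et c) 0); auto. nra. }
  rewrite ffd_gg in H. assert (0 <= gg A B e et c).
  { destruct (Rlt_or_le (gg A B e et c) 0); auto. pose proof (exp_pos (e*c)).
    assert (0 < exp (e*c) * (- gg A B e et c)) by (apply Rmult_lt_0_compat; lra). nra. }
  destruct (MVT_cor2 (ff A B e et) (ffd A B e et) x y Hxy (fun c _ => ff_der A B e et c)) as [d [Hd1 Hd2]].
  assert (gg A B e et c < gg A B e et d) by (apply gg_mono; lra).
  rewrite ffd_gg in Hd1. pose proof (exp_pos (e*d)).
  assert (0 < exp (e*d) * gg A B e et d) by (apply Rmult_lt_0_compat; lra). nra.
Qed.

Lemma keyIII A B e et x : 0 < A * (e - et) -> 0 < et -> 0 < x ->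
  0 <= gg A B e et 0 -> 0 < ff A B e et x.
Proof.
  intros H1 H2 Hx Hg.
  destruct (MVT_cor2 (ff A B e et) (ffd A B e et) 0 x Hx (fun c _ => ff_der A B e et c)) as [d [Hd1 Hd2]].
  rewrite ff0 in Hd1.
  assert (gg A B e et 0 < gg A B e et d) by (apply gg_mono; lra).
  rewrite ffd_gg in Hd1. pose proof (exp_pos (e*d)).
  assert (0 < exp (e*d) * gg A B e et d) by (apply Rmult_lt_0_compat; lra). nra.
Qed.

Lemma neg_near A B e et X : 0 < X -> gg A B e et 0 < 0 ->
  exists h, 0 < h <= X /\ ff A B e et h < 0.
Proof.
  intros HX Hg.
  assert (Hd := ff_der A B e et 0).
  assert (Hl : ffd A B e et 0 = gg A B e et 0) by (rewrite ffd_gg, Rmult_0_r, exp_0; ring).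
  rewrite Hl in Hd.
  assert (Heps : 0 < - gg A B e et 0 / 2) by lra.
  destruct (Hd _ Heps) as [[delta Hdel] Hdd].
  set (h := Rmin (delta / 2) X).
  assert (0 < h) by (unfold h; apply Rmin_glb_lt; lra).
  assert (h <= X) by apply Rmin_r.
  assert (h <= delta/2) by apply Rmin_l.
  exists h. split; [lra|].
  assert (Hq := Hdd h ltac:(lra) ltac:(rewrite Rabs_right; simpl; lra)).
  rewrite Rplus_0_l, ff0, Rminus_0_r in Hq.
  apply Rabs_def2 in Hq. destruct Hq as [Hq1 Hq2].
  assert (ff A B e et h / h < 0) by lra.
  unfold Rdiv in H2.
  assert (0 < / h) by (apply Rinv_0_lt_compat; lra).
  destruct (Rlt_or_le (ff A B e et h) 0); auto. nra.
Qed.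

Lemma ff_cont A B e et : continuity (ff A B e et).
Proof.
  intro x. apply derivable_continuous_pt. exists (ffd A B e et x). apply ff_der.
Qed.

Theorem theorem3p3
  (r mu sigma gamma xi alpha beta Am Bm c a tau omega tau1 tau2 : R)
  (Hr : 0 < r) (Hmu : r < mu) (Hsigma : 0 < sigma)
  (Heps : eps gamma r xi mu sigma <> 0)
  (Heps_t : eps_t alpha r beta mu sigma <> eps gamma r xi mu sigma)
  (Hages : a < tau < omega)
  (Htau1 : 0 <= tau1 < 1) (Htau2 : 0 <= tau2 < 1)
  (Hc : 0 < c) (Hc1 : c <> 1)
  (Hconv : ex_RInt_gen (annuity_integrand r Am Bm c tau) (at_point 0) (Rbar_locally p_infty))
  (Hapos : 0 < annuity r Am Bm c tau)
  (Hepst_pos : 0 < eps_t alpha r beta mu sigma) :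
  let e := eps gamma r xi mu sigma in
  let et := eps_t alpha r beta mu sigma in
  let atau := annuity r Am Bm c tau in
  let M := M2t r tau omega tau1 tau2 e et atau in
  let M'tau := M2t'_tau r tau omega tau1 tau2 atau in
  (* (i) *)
  ((0 <= M a -> 0 < M'tau ->
     exists zb, a <= zb < tau /\
       (forall z, a <= z < zb -> 0 < M z) /\
       M zb = 0 /\
       (forall z, zb < z < tau -> M z < 0))
  (* (ii) *)
  /\ (M a < 0 -> forall z, a <= z < tau -> M z < 0)
  (* (iii) *)
  /\ (M'tau <= 0 -> forall z, a <= z < tau -> 0 < M z)).
Proof.
  intros e et atau M M'tau.
  set (Q := (1 - exp (- r * (omega - tau))) / (r * atau)).
  set (A := (1 - tau2) / (e - et) * Q).
  set (B := (1 - tau1) / e).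
  assert (HM : forall z, M z = ff A B e et (tau - z)) by (intro; reflexivity).
  assert (Hee : e - et <> 0) by (unfold e, et in *; lra).
  assert (HQ : 0 < Q).
  { unfold Q. apply Rdiv_lt_0_compat.
    - assert (exp (- r * (omega - tau)) < 1); [|lra].
      rewrite <- exp_0. apply exp_increasing. nra.
    - apply Rmult_lt_0_compat; [lra|exact Hapos]. }
  assert (HA : 0 < A * (e - et)).
  { unfold A. replace ((1 - tau2) / (e - et) * Q * (e - et)) with ((1 - tau2) * Q) by (field; auto).
    apply Rmult_lt_0_compat; lra. }
  assert (Hg0 : gg A B e et 0 = - M'tau).
  { unfold gg, M'tau, M2t'_tau, A, B, Q. rewrite Rmult_0_r, exp_0.
    field. repeat split; auto. unfold atau; lra. lra. }
  assert (Het : 0 < et) by exact Hepst_pos.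
  split; [|split].
  - intros Ha Hm.
    destruct (neg_near A B e et (tau - a) ltac:(lra) ltac:(lra)) as [h [Hh Hfh]].
    rewrite HM in Ha.
    destruct (IVT_cor (ff A B e et) h (tau - a) (ff_cont A B e et) ltac:(lra) ltac:(nra)) as [xs [Hxs Hfxs]].
    exists (tau - xs). split; [lra|]. split; [|split].
    + intros z Hz. rewrite HM. apply (keyL A B e et xs); auto; lra.
    + rewrite HM. replace (tau - (tau - xs)) with xs by ring. exact Hfxs.
    + intros z Hz. rewrite HM.
      destruct (Rlt_or_le (ff A B e et (tau - z)) 0) as [|Hge]; auto.
      assert (0 < ff A B e et xs) by (apply (keyL A B e et (tau - z)); auto; lra). lra.
  - intros Ha z Hz. rewrite HM. rewrite HM in Ha.
    destruct (Req_dec z a) as [->|Hza]; auto.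
    destruct (Rlt_or_le (ff A B e et (tau - z)) 0) as [|Hge]; auto.
    assert (0 < ff A B e et (tau - a)) by (apply (keyL A B e et (tau - z)); auto; lra). lra.
  - intros Hm z Hz. rewrite HM. apply keyIII; auto; lra.
Qed.
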